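(* Let $n \ge 0$ and $0\le d\le m$ with $m \leq 2^{n+1}$. Then the Milnor primitive $Q_n$ acts trivially on $H^*(\operatorname{Gr}_d(\mathbb{R}^m);\mathbb{Z}/2)$.
   Context: $\operatorname{Gr}_d(\mathbb{R}^m)$ is the real Grassmannian of $d$-planes in $\mathbb{R}^m$. The Milnor primitives $Q_n$ in the mod 2 Steenrod algebra are defined by $Q_0 = Sq^1$ and $Q_n = [Q_{n-1}, Sq^{2^n}]$. *)

(* Defs.v *)
From HB Require Import structures.
From mathcomp Require Import all_boot all_order all_algebra.
From mathcomp Require Import mpoly.
Unset Strict Implicit. Unset Printing Implicit Defensive.
Import GRing.Theory.
Local Open Scope ring_scope.

(* Polynomial ring F_2[x_1, ..., x_d]: the mod 2 cohomology of (RP^oo)^d,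
   x_i of degree 1.  H^*(BO(d);F_2) is the subring of symmetric polynomials
   (w_k = k-th elementary symmetric polynomial). *)
Notation Pd d := {mpoly 'F_2[d]}.

(* Sq^k on a monomial x^a, via the Cartan formula and Sq(x_i) = x_i + x_i^2:
   Sq^k (x^a) = sum_{|b| = k} prod_i C(a_i, b_i) x^(a+b). *)
Definition SqMon (d k : nat) (a : 'X_{1..d}) : Pd d :=
  \sum_(b : 'X_{1..d < k.+1} | mdeg b == k)
     ((\prod_(i < d) 'C(a i, b i))%N)%:R *: 'X_[(a + b)%MM].

Definition Sq (d k : nat) (p : Pd d) : Pd d :=
  \sum_(a <- msupp p) p@_a *: SqMon d k a.

Fixpoint Qm (d n : nat) (p : Pd d) : Pd d :=
  match n with
  | 0 => Sq d 1 p
  | n'.+1 => Qm d n' (Sq d (2 ^ n) p) - Sq d (2 ^ n) (Qm d n' p)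
  end.

(* complete homogeneous symmetric polynomial h_j = dual Stiefel-Whitney
   class wbar_j (mod 2) of the tautological bundle. *)
Definition hcomp (d j : nat) : Pd d :=
  \sum_(b : 'X_{1..d < j.+1} | mdeg b == j) 'X_[(b : 'X_{1..d})].

(* H^*(Gr_d(R^m);F_2) = Sym_d / (wbar_j : m - d < j <= m).  A symmetric
   polynomial represents the zero class iff it lies in this ideal of Sym_d. *)
Definition in_Gr_ideal (d m : nat) (q : Pd d) : Prop :=
  exists c : nat -> Pd d, (forall j, c j \is symmetric) /\
    q = \sum_(j < m.+1 | (m - d < j)%N) c j * hcomp d j.

(* Main.v *)
Require Import Defs.
From HB Require Import structures.
From mathcomp Require Import all_boot all_order all_algebra.
From mathcomp Require Import mpoly.
From mathcomp Require Import perm.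
From mathcomp Require Import zify ring.
Set Implicit Arguments. Unset Strict Implicit. Unset Printing Implicit Defensive.
Import GRing.Theory.
Local Open Scope ring_scope.

Section S.
Variable d : nat.
Local Notation R := {mpoly 'F_2[d]}.

Lemma F2_two : (1 + 1 : 'F_2) = 0.
Proof. by apply/val_inj. Qed.

Lemma addxx (p : R) : p + p = 0.
Proof. by rewrite -[p]scale1r -scalerDl F2_two scale0r. Qed.

Lemma oppx (p : R) : - p = p.
Proof. by apply/esym/eqP; rewrite -addr_eq0 addxx. Qed.

Lemma addxxC (p q : R) : p + (p + q) = q.
Proof. by rewrite addrA addxx add0r. Qed.

Definition lin (F : 'X_{1..d} -> R) (p : R) : R := \sum_(a <- msupp p) p@_a *: F a.

Lemma lin_sub F p s : uniq s -> {subset msupp p <= s} ->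
  lin F p = \sum_(a <- s) p@_a *: F a.
Proof.
move=> us hsub; rewrite /lin [RHS](bigID (fun a => a \in msupp p)) /=.
rewrite [X in _ + X]big1 ?addr0; last first.
  by move=> a /memN_msupp_eq0 ->; rewrite scale0r.
rewrite -(big_filter s (fun a => a \in msupp p)); apply/perm_big/uniq_perm.
- by rewrite ?filter_uniq ?msupp_uniq.
- by rewrite ?filter_uniq ?msupp_uniq.
move=> a; rewrite mem_filter; apply/idP/idP => [h|/andP[]//]; by rewrite h (hsub _ h).
Qed.

Lemma lin_add F p q : lin F (p + q) = lin F p + lin F q.
Proof.
pose s := undup (msupp p ++ msupp q).
have us : uniq s by exact: undup_uniq.
rewrite (@lin_sub F (p + q) s) //; last first.
  by move=> a /msuppD_le; rewrite mem_undup.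
rewrite (@lin_sub F p s) // ?(@lin_sub F q s) //; last first.
- by move=> a ha; rewrite mem_undup mem_cat ha ?orbT.
- by move=> a ha; rewrite mem_undup mem_cat ha ?orbT.
by rewrite -big_split /=; apply: eq_bigr => a _; rewrite mcoeffD scalerDl.
Qed.

Lemma lin_scale F c p : lin F (c *: p) = c *: lin F p.
Proof.
rewrite (@lin_sub F (c *: p) (msupp p)) //; last exact: msuppZ_le.
by rewrite /lin scaler_sumr; apply: eq_bigr => a _; rewrite mcoeffZ scalerA.
Qed.

Lemma lin_X F a : lin F 'X_[a] = F a.
Proof. by rewrite /lin msuppX big_seq1 mcoeffX eqxx scale1r. Qed.

Lemma lin0 F : lin F 0 = 0.
Proof. by rewrite /lin msupp0 big_nil. Qed.

Lemma mono_ind (P : R -> Prop) :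
  (forall p q, P p -> P q -> P (p + q)) ->
  (forall c p, P p -> P (c *: p)) ->
  P 1 ->
  (forall p i, P p -> P (p * 'X_i)) ->
  forall p, P p.
Proof.
move=> hD hZ h1 hX.
have hXa : forall a, P 'X_[a].
  move=> a; have [k hk] : exists k, mdeg a = k by eexists.
  elim: k a hk => [|k IH] a ha.
    by move/eqP: ha; rewrite mdeg_eq0 => /eqP ->; rewrite mpolyX0.
  have [i hi] : exists i, (0 < a i)%N.
    apply/existsP; apply: contraT; rewrite negb_exists => /forallP h.
    suff : mdeg a = 0%N by rewrite ha.
    by rewrite mdegE big1 // => i _; move: (h i); rewrite lt0n negbK => /eqP.
  have -> : a = (a - U_(i) + U_(i))%MM.
    by apply/mnmP => j; rewrite !mnmE; case: eqP => [<-|]; rewrite ?addn0 ?subn0 // subnK.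
  rewrite mpolyXD; apply: hX; apply: IH.
  have := mdegD (a - U_(i))%MM U_(i); rewrite mdeg1.
  have -> : (a - U_(i) + U_(i))%MM = a.
    by apply/mnmP => j; rewrite !mnmE; case: eqP => [<-|]; rewrite ?addn0 ?subn0 // subnK.
  by rewrite ha addn1 => -[] ->.
move=> p; rewrite [p]mpolyE.
elim: (msupp p) => [|a s IH]; first by rewrite big_nil -(scale0r 1); apply: hZ.
by rewrite big_cons; apply: hD => //; apply: hZ.
Qed.


Lemma mcoeffMXg (q : R) m c :
  (q * 'X_[m])@_c = if (m <= c)%MM then q@_(c - m)%MM else 0.
Proof.
case: ifP => h.
  by rewrite -{1}(submK h) addmC mcoeffMX.
apply/eqP; rewrite mcoeff_eq0 (perm_mem (msuppMX q m)).
by apply/mapP => -[m' _ hc]; move: h; rewrite hc lem_addr.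
Qed.

Definition beta (x y : nat) : nat := if (x <= y)%N then 'C(x, y - x) else 0%N.

Lemma beta_S0 x : beta x.+1 0 = 0%N.
Proof. by []. Qed.

Lemma beta_SS x y :
  beta x.+1 y.+1 = (beta x y + (if y is y'.+1 then beta x y' else 0))%N.
Proof.
rewrite /beta ltnS; case: y => [|y]; first by case: x.
have [h|h] := leqP x y.
  by rewrite (leqW h) subSS subSn // binS subSn.
case: (eqVneq x y.+1) => [->|hne]; first by rewrite ltnSn !subnn !bin0.
have h2 : (y.+1 < x)%N by rewrite ltn_neqAle eq_sym hne h.
by rewrite leqNgt h2.
Qed.

Lemma mdeg_sub (a c : 'X_{1..d}) : (a <= c)%MM -> mdeg (c - a)%MM = (mdeg c - mdeg a)%N.
Proof. by move=> h; rewrite -{2}(submK h) mdegD addnK. Qed.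

Lemma SqMon_coef k a c : (SqMon d k a)@_c =
  ((mdeg c == mdeg a + k)%N * \prod_(j < d) beta (a j) (c j))%:R.
Proof.
rewrite /SqMon raddf_sum /=.
under eq_bigr => b _ do rewrite mcoeffZ mcoeffX.
have [hle|hnle] := boolP (a <= c)%MM.
  have hP : (\prod_(j < d) beta (a j) (c j) = \prod_(j < d) 'C(a j, (c - a)%MM j))%N.
    apply: eq_bigr => j _; rewrite /beta mnmBE.
    by move/mnm_lepP: hle => ->.
  have [hdeg|hdeg] := eqVneq (mdeg c) (mdeg a + k)%N.
    have hb : (mdeg (c - a)%MM < k.+1)%N by rewrite mdeg_sub // hdeg addKn.
    rewrite (bigD1 (BMultinom hb)) /=; last by rewrite mdeg_sub // hdeg addKn.
    rewrite addmC submK // eqxx mulr1 [X in _ + X]big1 ?addr0.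
      by rewrite mul1n hP.
    move=> b /andP [_ hne].
    have -> : ((a + b)%MM == c) = false.
      apply/negbTE; apply: contra hne => /eqP hc; apply/eqP/val_inj => /=.
      by rewrite -hc addmC addmK.
    by rewrite mulr0.
  rewrite mul0n big1 //.
  move=> b /eqP hbk.
  have -> : ((a + b)%MM == c) = false.
    by apply/negbTE; apply: contra hdeg => /eqP <-; rewrite mdegD hbk.
  by rewrite mulr0.
have [j hj] : exists j, (c j < a j)%N.
  apply/existsP; apply: contraR hnle; rewrite negb_exists => /forallP h.
  by apply/mnm_lepP => j; move: (h j); rewrite -leqNgt.
have hz : (\prod_(j < d) beta (a j) (c j) = 0)%N.
  by rewrite (bigD1 j) //= {1}/beta leqNgt hj.
rewrite hz muln0 big1 //.
move=> b _; have -> : ((a + b)%MM == c) = false.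
  by apply/negbTE; apply: contra hnle => /eqP <-; rewrite lem_addr.
by rewrite mulr0.
Qed.

Lemma prodD1 (F : 'I_d -> nat) i :
  (\prod_(j < d) F j = F i * \prod_(j < d | j != i) F j)%N.
Proof. by rewrite (bigD1 i). Qed.

Lemma prod_beta_S (a c : 'X_{1..d}) i :
  (\prod_(j < d) beta ((a + U_(i))%MM j) (c j) =
   (if 1 <= c i then \prod_(j < d) beta (a j) ((c - U_(i))%MM j) else 0) +
   (if 2 <= c i then \prod_(j < d) beta (a j) ((c - U_(i) *+ 2)%MM j) else 0))%N.
Proof.
rewrite !(prodD1 _ i) !mnmBE !mnmDE !mnm1E eqxx addn1.
set P := (\prod_(j | j != i) beta (a j) (c j))%N.
have e1 : (\prod_(j | j != i) beta ((a + U_(i))%MM j) (c j) = P)%N.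
  by apply: eq_bigr => j hj; rewrite mnmDE mnm1E eq_sym (negbTE hj) addn0.
have e2 : (\prod_(j | j != i) beta (a j) ((c - U_(i))%MM j) = P)%N.
  by apply: eq_bigr => j hj; rewrite mnmBE mnm1E eq_sym (negbTE hj) subn0.
have e3 : (\prod_(j | j != i) beta (a j) ((c - U_(i) *+ 2)%MM j) = P)%N.
  by apply: eq_bigr => j hj; rewrite mnmBE ?mulmnE mnm1E eq_sym (negbTE hj) ?mul0n subn0.
rewrite e1 e2 e3; case: (c i) => [|[|y]] //=.
  by rewrite beta_SS /= subnn !addn0.
by rewrite beta_SS mulnDl; congr (_ * _ + _ * _)%N; congr (beta _ _); lia.
Qed.

Lemma lem_mdeg (x y : 'X_{1..d}) : (x <= y)%MM -> (mdeg x <= mdeg y)%N.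
Proof. by move=> h; rewrite -(submK h) mdegD leq_addl. Qed.

Lemma prod_beta_le (x y : 'X_{1..d}) :
  (\prod_(j < d) beta (x j) (y j) != 0)%N -> (mdeg x <= mdeg y)%N.
Proof.
move=> h; apply: lem_mdeg; apply/mnm_lepP => j; apply: contraR h; rewrite -ltnNge => hj.
by rewrite (bigD1 j) //= {1}/beta leqNgt hj.
Qed.

Lemma mdeg_ge (c : 'X_{1..d}) i : (c i <= mdeg c)%N.
Proof. by rewrite mdegE (bigD1 i) //= leq_addr. Qed.

Lemma lemUn (c : 'X_{1..d}) i k : (U_(i) *+ k <= c)%MM = (k <= c i)%N.
Proof.
apply/mnm_lepP/idP => [h|h j]; first by move: (h i); rewrite mulmnE mnm1E eqxx mul1n.
by rewrite mulmnE mnm1E; case: eqP => [<-|]; rewrite ?mul1n ?mul0n.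
Qed.

Lemma lemU (c : 'X_{1..d}) i : (U_(i) <= c)%MM = (1 <= c i)%N.
Proof. by rewrite -(lemUn c i 1) mulm1n. Qed.

Lemma SqMonS k a i : SqMon d k (a + U_(i))%MM =
  SqMon d k a * 'X_i + (if k is k'.+1 then SqMon d k' a * 'X_i ^+ 2 else 0).
Proof.
apply/mpolyP => c.
have hX2 : forall q : R, (q * 'X_i ^+ 2)@_c =
    if (2 <= c i)%N then q@_(c - U_(i) *+ 2)%MM else 0.
  by move=> q; rewrite mpolyXn mcoeffMXg lemUn.
have hge := mdeg_ge c i.
have hD1 : (1 <= c i)%N -> mdeg (c - U_(i))%MM = (mdeg c - 1)%N.
  by move=> h; rewrite mdeg_sub ?lemU // mdeg1.
have hD2 : (2 <= c i)%N -> mdeg (c - U_(i) *+ 2)%MM = (mdeg c - 2)%N.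
  by move=> h; rewrite mdeg_sub ?lemUn // mdegMn mdeg1.
rewrite mcoeffD !SqMon_coef mdegD mdeg1 prod_beta_S mcoeffMXg SqMon_coef lemU.
set P1 := (\prod_(j < d) beta (a j) ((c - U_(i))%MM j))%N.
set P2 := (\prod_(j < d) beta (a j) ((c - U_(i) *+ 2)%MM j))%N.
have hP2 : (2 <= c i)%N -> (P2 != 0)%N -> (mdeg a <= mdeg c - 2)%N.
  by move=> h2 /prod_beta_le; rewrite hD2.
case: k => [|k] /=; last rewrite hX2 SqMon_coef.
  rewrite mcoeff0 addr0; case ci: (c i) => [|[|y]] /=.
  - by rewrite ?addn0 ?muln0 ?addr0.
  - rewrite hD1 ?ci // addn0.
    have -> : (mdeg c - 1 == mdeg a + 0)%N = (mdeg c == mdeg a + 1)%N.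
      by apply/eqP/eqP; rewrite ci in hge; lia.
    by rewrite addn0.
  - rewrite hD1 ?ci // mulnDr.
    have -> : (mdeg c - 1 == mdeg a + 0)%N = (mdeg c == mdeg a + 1 + 0)%N.
      by apply/eqP/eqP; rewrite ci in hge; lia.
    case: eqP => hdc; last by rewrite !mul0n.
    have -> : P2 = 0%N.
      apply/eqP; apply: contraT => hnz; have := hP2 _ hnz.
      by rewrite ci => /(_ isT); rewrite ci in hge; lia.
    by rewrite muln0 addn0.
rewrite -/P2; case ci: (c i) => [|[|y]] /=.
- by rewrite ?addn0 ?muln0 ?addr0.
- rewrite hD1 ?ci // addn0 addr0.
  have -> : (mdeg c - 1 == mdeg a + k.+1)%N = (mdeg c == mdeg a + 1 + k.+1)%N.
    by apply/eqP/eqP; rewrite ci in hge; lia.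
  by rewrite ?addn0.
- rewrite hD1 ?ci // hD2 ?ci // mulnDr natrD.
  have -> : (mdeg c - 1 == mdeg a + k.+1)%N = (mdeg c == mdeg a + 1 + k.+1)%N.
    by apply/eqP/eqP; rewrite ci in hge; lia.
  have -> : (mdeg c - 2 == mdeg a + k)%N = (mdeg c == mdeg a + 1 + k.+1)%N.
    by apply/eqP/eqP; rewrite ci in hge; lia.
  by rewrite ?addn0.
Qed.

Lemma Sq_add k p q : Sq d k (p + q) = Sq d k p + Sq d k q.
Proof. exact: lin_add. Qed.
Lemma Sq_scale k c p : Sq d k (c *: p) = c *: Sq d k p.
Proof. exact: lin_scale. Qed.
Lemma Sq_0 k : Sq d k 0 = 0.
Proof. exact: lin0. Qed.
Lemma Sq_X k a : Sq d k 'X_[a] = SqMon d k a.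
Proof. exact: lin_X. Qed.

Definition SQ k j (p : R) := if (j <= k)%N then Sq d (k - j) p else 0.

Lemma SQ_add k j p q : SQ k j (p + q) = SQ k j p + SQ k j q.
Proof. by rewrite /SQ; case: ifP; rewrite ?Sq_add ?addr0. Qed.
Lemma SQ_scale k j c p : SQ k j (c *: p) = c *: SQ k j p.
Proof. by rewrite /SQ; case: ifP; rewrite ?Sq_scale ?scaler0. Qed.

Lemma Sq_mulX k p i :
  Sq d k (p * 'X_i) = Sq d k p * 'X_i + SQ k 1 p * 'X_i ^+ 2.
Proof.
elim/mpolyind: p => [|c m p _ _ IH].
  by rewrite mul0r /SQ !Sq_0; case: ifP; rewrite ?mul0r ?addr0.
rewrite mulrDl -scalerAl -mpolyXD Sq_add Sq_scale Sq_X SqMonS IH.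
rewrite SQ_add SQ_scale Sq_add Sq_scale Sq_X /SQ.
clear IH; case: k => [|k] /=; rewrite ?mul0r ?addr0 ?subn1 /=.
  by rewrite scaler0 mul0r addr0 mulrDl -scalerAl.
rewrite Sq_X !mulrDl -!scalerAl scalerDr -!addrA; congr (_ + _).
by rewrite addrCA.
Qed.

Lemma Sq_one k : Sq d k 1 = if k == 0%N then 1 else 0.
Proof.
rewrite -mpolyX0 Sq_X; apply/mpolyP => c; rewrite SqMon_coef mdeg0 add0n.
have -> : (\prod_(j < d) beta ((0%MM : 'X_{1..d}) j) (c j))%N = (c == 0%MM).
  case: (eqVneq c 0%MM) => [->|hc].
    by rewrite big1 // => j _; rewrite mnm0E.
  have [j hj] : exists j, c j != 0%N.
    apply/existsP; apply: contraR hc; rewrite negb_exists => /forallP h.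
    by apply/eqP/mnmP => j; rewrite mnm0E; move: (h j); rewrite negbK => /eqP.
  by rewrite (bigD1 j) //= mnm0E /beta subn0 bin0n (negbTE hj).
case: (eqVneq k 0%N) => [->|hk]; rewrite ?mcoeff0 ?mpolyX0 ?mcoeff1 ?mcoeffX.
  by rewrite -mdeg_eq0; case: (mdeg c == 0%N).
case: (eqVneq c 0%MM) => [->|hc]; last by rewrite muln0.
by rewrite mdeg0 eq_sym (negbTE hk).
Qed.

Lemma Sq0_id p : Sq d 0 p = p.
Proof.
elim/mono_ind: p => [p q hp hq|c p hp||p i hp].
- by rewrite Sq_add hp hq.
- by rewrite Sq_scale hp.
- by rewrite Sq_one.
- by rewrite Sq_mulX hp /SQ /= mul0r addr0.
Qed.

Definition Der (f : 'I_d -> R) (p : R) : R := \sum_(i < d) f i * mderiv i p.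

Lemma Der_add f p q : Der f (p + q) = Der f p + Der f q.
Proof. by rewrite /Der -big_split; apply: eq_bigr => i _; rewrite mderivD mulrDr. Qed.
Lemma Der_scale f c p : Der f (c *: p) = c *: Der f p.
Proof. by rewrite /Der scaler_sumr; apply: eq_bigr => i _; rewrite mderivZ scalerAr. Qed.
Lemma Der_one f : Der f 1 = 0.
Proof. by rewrite /Der big1 // => i _; rewrite -mpolyC1 mderivC mulr0. Qed.
Lemma Der_C f (c : 'F_2) : Der f c%:MP = 0.
Proof. by rewrite /Der big1 // => i _; rewrite mderivC mulr0. Qed.

Lemma Der_mulX f p j : Der f (p * 'X_j) = Der f p * 'X_j + p * f j.
Proof.
rewrite /Der mulr_suml.
under eq_bigr => i _ do rewrite mderivM mderivX mulrDr.
rewrite big_split /=; congr (_ + _).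
  by apply: eq_bigr => i _; rewrite mulrA.
rewrite (bigD1 j) //= big1 ?addr0.
  have -> : (U_(j) - U_(j) = 0 :> 'X_{1..d})%MM by apply/mnmP => l; rewrite !mnmE subnn.
  by rewrite mnm1E eqxx mpolyX0 scale1r mulr1 mulrC.
move=> i hi; rewrite mnm1E eq_sym (negbTE hi) scale0r.
by rewrite mulr0 mulr0.
Qed.

Lemma Der_mulX2 f p j : Der f (p * 'X_j ^+ 2) = Der f p * 'X_j ^+ 2.
Proof.
rewrite expr2 mulrA !Der_mulX mulrDl -!mulrA -addrA.
by rewrite [f j * _]mulrC addxx addr0.
Qed.

Lemma char2_helper (a b c Y : R) :
  (a * Y + b * (Y * Y)) * Y + (b * Y + c * (Y * Y)) * (Y * Y) =
  a * (Y * Y) + c * ((Y * Y) * (Y * Y)).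
Proof.
have -> : (a * Y + b * (Y * Y)) * Y + (b * Y + c * (Y * Y)) * (Y * Y) =
  a * (Y * Y) + c * ((Y * Y) * (Y * Y)) + (b * (Y * Y * Y) + b * (Y * Y * Y)) by ring.
by rewrite addxx addr0.
Qed.

Lemma Sq_mulXpow s : forall k p i,
  Sq d k (p * 'X_i ^+ (2 ^ s)) =
  Sq d k p * 'X_i ^+ (2 ^ s) + SQ k (2 ^ s) p * ('X_i ^+ (2 ^ s) * 'X_i ^+ (2 ^ s)).
Proof.
elim: s => [|s IH] k p i.
  by rewrite expn0 expr1 Sq_mulX -expr2.
rewrite expnS mul2n -addnn exprD mulrA IH IH.
set j := (2 ^ s)%N; set Y := 'X_i ^+ j.
rewrite {2 3}/SQ; case: leqP => hjk.
  rewrite /SQ hjk IH char2_helper; congr (_ + _ * _); rewrite /SQ.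
  have -> : (j <= k - j)%N = (j + j <= k)%N by apply/idP/idP; lia.
  by case: ifP => // _; rewrite subnDA.
rewrite /SQ leqNgt hjk /= mul0r !addr0.
have -> : (j + j <= k)%N = false by apply/negbTE; rewrite -ltnNge; lia.
by rewrite mul0r addr0 mulrA.
Qed.

Lemma Der_0 f : Der f 0 = 0.
Proof. by rewrite /Der big1 // => i _; rewrite mderiv0 mulr0. Qed.

Lemma SQ_le k j p : (j <= k)%N -> SQ k j p = Sq d (k - j) p.
Proof. by rewrite /SQ => ->. Qed.
Lemma SQ_gt k j p : (k < j)%N -> SQ k j p = 0.
Proof. by move=> h; rewrite /SQ leqNgt h. Qed.

Definition fK s (i : 'I_d) : R := 'X_i ^+ (2 ^ s).

Lemma comm_step s : forall p k,
  Der (fK s) (Sq d k p) + Sq d k (Der (fK s) p) = Der (fK s.+1) (SQ k (2 ^ s) p).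
Proof.
move=> p; elim/mono_ind: p => [p q hp hq|c p hp||p i hp] k.
- by rewrite !Sq_add !Der_add Sq_add SQ_add Der_add -hp -hq addrACA.
- by rewrite !Sq_scale !Der_scale Sq_scale SQ_scale Der_scale -hp scalerDr.
- rewrite Der_one Sq_0 addr0 Sq_one /SQ.
  case: ifP => _; case: ifP => _; rewrite ?Sq_one; try case: ifP => _;
    by rewrite ?Der_one ?Der_0.
have hK : (0 < 2 ^ s)%N by rewrite expn_gt0.
have eY : 'X_i ^+ (2 ^ s) * 'X_i ^+ (2 ^ s) = fK s.+1 i by rewrite /fK -exprD expnS mul2n addnn.
rewrite Sq_mulX Der_add Der_mulX Der_mulX2 Der_mulX Sq_add Sq_mulX.
rewrite [fK s i]/fK Sq_mulXpow eY.
set K := (2 ^ s)%N; set D := Der (fK s); set D' := Der (fK s.+1).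
set X := 'X_i; set f1 := fK s.+1 i.
have -> : D (Sq d k p) * X + Sq d k p * X ^+ K + D (SQ k 1 p) * X ^+ 2 +
    (Sq d k (D p) * X + SQ k 1 (D p) * X ^+ 2 +
     (Sq d k p * X ^+ K + SQ k K p * f1)) =
   (D (Sq d k p) + Sq d k (D p)) * X + (D (SQ k 1 p) + SQ k 1 (D p)) * X ^+ 2 +
   SQ k K p * f1 + (Sq d k p * X ^+ K + Sq d k p * X ^+ K) by ring.
rewrite addxx addr0 hp.
have [hKk|hKk] := leqP K k.
  rewrite (SQ_le _ hKk) (SQ_le _ hKk) Sq_mulX /D' Der_add Der_mulX Der_mulX2 -/D'.
  case: k hKk => [|k] hKk; first by move: hKk; rewrite leqNgt hK.
  rewrite (SQ_le _ (isT : (1 <= k.+1)%N)) (SQ_le _ (isT : (1 <= k.+1)%N)) subn1 /= hp.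
  have -> : SQ k K p = SQ (k.+1 - K) 1 p.
    rewrite /SQ; have -> : (1 <= k.+1 - K)%N = (K <= k)%N by apply/idP/idP; lia.
    by case: ifP => // _; congr (Sq d _ p); lia.
  by rewrite /D' /X /f1; ring.
rewrite (SQ_gt _ hKk) (SQ_gt _ hKk) !Der_0 mul0r add0r.
case: k hKk => [|k] hKk.
  by rewrite !SQ_gt // /D /D' !Der_0 addr0 !mul0r addr0.
rewrite (SQ_le _ (isT : (1 <= k.+1)%N)) (SQ_le _ (isT : (1 <= k.+1)%N)) subn1 /= hp.
by rewrite (SQ_gt _ (ltnW hKk)) /D' !Der_0 !mul0r !addr0.
Qed.

Lemma Sq1_Der p : Sq d 1 p = Der (fK 1) p.
Proof.
elim/mono_ind: p => [p q hp hq|c p hp||p i hp].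
- by rewrite Sq_add Der_add hp hq.
- by rewrite Sq_scale Der_scale hp.
- by rewrite Sq_one Der_one.
- by rewrite Sq_mulX Der_mulX hp /SQ /= Sq0_id.
Qed.

Lemma Qm_Der n : forall p, Qm d n p = Der (fK n.+1) p.
Proof.
elim: n => [|n IH] p /=; first exact: Sq1_Der.
by rewrite !IH oppx comm_step /SQ leqnn subnn Sq0_id.
Qed.

Lemma msymX1 (g : {perm 'I_d}) i : msym g ('X_i : R) = 'X_(g i).
Proof.
rewrite msymX; congr 'X_[_]; apply/mnmP => j; rewrite !mnmE.
congr (nat_of_bool _); by apply/eqP/eqP => h; [rewrite h permKV | rewrite -h permK].
Qed.

Lemma msymXn (g : {perm 'I_d}) i e : msym g (('X_i : R) ^+ e) = 'X_(g i) ^+ e.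
Proof.
elim: e => [|e IH]; first by rewrite !expr0 msym1.
by rewrite !exprS msymM msymX1 IH.
Qed.

Lemma Der_msym f (g : {perm 'I_d}) : (forall i, msym g (f i) = f (g i)) ->
  forall p, msym g (Der f p) = Der f (msym g p).
Proof.
move=> hf; elim/mono_ind => [p q hp hq|c p hp||p i hp].
- by rewrite Der_add !msymD Der_add hp hq.
- by rewrite Der_scale !msymZ Der_scale hp.
- by rewrite Der_one msym0 msym1 Der_one.
- by rewrite Der_mulX msymD !msymM msymX1 hf hp Der_mulX.
Qed.

Lemma Der_sym f : (forall (g : {perm 'I_d}) i, msym g (f i) = f (g i)) ->
  forall p, p \is symmetric -> Der f p \is symmetric.
Proof.
move=> hf p /issymP hp; apply/issymP => g.
by rewrite (Der_msym (hf g)) hp.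
Qed.

(* elementary symmetric polynomials of a list of variables *)
Definition E (k : nat) (s : seq 'I_d) : R :=
  (\prod_(l <- s) (1 + ('X_l : R)%:P * 'X))`_k.

Lemma E_nil k : E k [::] = (k == 0%N)%:R.
Proof. by rewrite /E big_nil coef1. Qed.

Lemma E_cons k l s :
  E k (l :: s) = E k s + (if k is k'.+1 then 'X_l * E k' s else 0).
Proof.
rewrite /E big_cons mulrDl mul1r coefD -mulrA coefCM coefXM.
by case: k => [|k] /=; rewrite ?mulr0.
Qed.

Lemma E_perm k s1 s2 : perm_eq s1 s2 -> E k s1 = E k s2.
Proof. by move=> h; rewrite /E (perm_big _ h). Qed.

Lemma E_big k s : (size s < k)%N -> E k s = 0.
Proof.
elim: s k => [|l s IH] [|k] //=; rewrite ?E_nil // => h.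
by rewrite E_cons (IH k) ?(IH k.+1) ?mulr0 ?addr0 // ltnW.
Qed.

Lemma E_msym (g : {perm 'I_d}) k s : msym g (E k s) = E k (map g s).
Proof.
elim: s k => [|l s IH] k /=; first by rewrite !E_nil rmorph_nat.
rewrite !E_cons msymD IH; case: k => [|k]; rewrite ?msym0 //.
by rewrite msymM msymX1 IH.
Qed.

Definition supp_in (c : 'X_{1..d}) (A : {set 'I_d}) :=
  [forall x, (x \notin A) ==> (c x == 0%N)].

Definition hB (j : nat) (A : {set 'I_d}) : R :=
  \sum_(b : 'X_{1..d < j.+1} | (mdeg b == j) && supp_in b A) 'X_[b].

Lemma coef_bsum j (Q : pred 'X_{1..d}) c :
  (forall b, Q b -> (mdeg b < j)%N) ->
  (\sum_(b : 'X_{1..d < j} | Q b) ('X_[b] : R))@_c = (Q c)%:R.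
Proof.
move=> hQ; rewrite raddf_sum /=.
under eq_bigr => b _ do rewrite mcoeffX.
case: (boolP (Q c)) => hc.
  rewrite (bigD1 (BMultinom (hQ _ hc))) //= eqxx big1 ?addr0 //.
  move=> b /andP [_ hb]; case: eqP => // hbc; case/negP: hb.
  by apply/eqP/val_inj; rewrite /= hbc.
by rewrite big1 // => b hb; case: eqP => // hbc; move: hc; rewrite -hbc hb.
Qed.

Lemma hB_coef j A c : (hB j A)@_c = ((mdeg c == j) && supp_in c A)%:R.
Proof. by rewrite /hB (@coef_bsum j.+1 (fun b => (mdeg b == j) && supp_in b A)) // => b /andP [/eqP -> _]. Qed.

Lemma hcomp_hB j : hcomp d j = hB j setT.
Proof.
apply/mpolyP => c; rewrite hB_coef /hcomp (@coef_bsum j.+1 (fun b => mdeg b == j)); last by move=> b /eqP ->.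
suff -> : supp_in c setT by rewrite andbT.
by apply/forallP => x; rewrite inE.
Qed.

Lemma hB_0 A : hB 0 A = 1.
Proof.
apply/mpolyP => c; rewrite hB_coef mcoeff1 mdeg_eq0.
case: eqP => [->|] //=.
suff -> : supp_in 0 A by []. by apply/forallP => x; rewrite mnm0E eqxx implybT.
Qed.

Lemma hB_set1 j i : hB j [set i] = 'X_i ^+ j.
Proof.
apply/mpolyP => c; rewrite hB_coef mcoeffXn; congr ((nat_of_bool _) %:R).
apply/andP/eqP => [[/eqP hd /forallP hs]|<-].
  have hz : forall x, x != i -> c x = 0%N.
    by move=> x hx; move: (hs x); rewrite inE hx => /eqP.
  have hci : c i = j.
    rewrite -hd mdegE (bigD1 i) //= big1 ?addn0 // => x hx; exact: hz.
  apply/mnmP => x; rewrite mulmnE mnm1E.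
  case: (eqVneq i x) => [<-|hx] /=; first by rewrite mul1n hci.
  by rewrite mul0n hz // eq_sym.
split; first by rewrite mdegMn mdeg1 mul1n.
apply/forallP => x; rewrite inE mulmnE mnm1E; apply/implyP.
by rewrite eq_sym => /negbTE ->.
Qed.

Lemma hB_rec j (A : {set 'I_d}) (l : 'I_d) : l \notin A ->
  hB j.+1 (l |: A) = hB j.+1 A + 'X_l * hB j (l |: A).
Proof.
move=> hl; apply/mpolyP => c; rewrite mcoeffD mulrC mcoeffMXg !hB_coef lemU.
have hge := mdeg_ge c l.
case: (posnP (c l)) => hcl /=.
  rewrite addr0; congr (_ && _)%:R; apply/forallP/forallP => h x;
    move: (h x); rewrite !inE; case: (eqVneq x l) => [->|] //=.
  by rewrite hcl eqxx implybT.
have -> : supp_in c A = false.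
  by apply/negbTE/negP => /forallP /(_ l); rewrite hl /= => /eqP h; move: hcl; rewrite h.
rewrite andbF add0r mdeg_sub ?lemU // mdeg1.
have -> : (mdeg c - 1 == j)%N = (mdeg c == j.+1)%N by apply/eqP/eqP; lia.
congr (_ && _)%:R; apply/forallP/forallP => h x; move: (h x); rewrite !inE mnmBE mnm1E;
  case: (eqVneq x l) => [->|hx] //=; by rewrite subn0.
Qed.

Lemma key_id i n : forall s : seq 'I_d, uniq s -> i \notin s ->
  'X_i ^+ n = \sum_(k < n.+1) E k s * hB (n - k) (i |: [set x in s]).
Proof.
elim => [|l s IH] /=.
  move=> _ _; rewrite big_ord_recl /= E_nil mul1r subn0 big1 ?addr0.
    have -> : i |: [set x in [::] : seq 'I_d] = [set i].
      by apply/setP => x; rewrite !inE orbF.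
    by rewrite hB_set1.
  by move=> k _; rewrite E_nil /= mul0r.
move=> /andP [hl us]; rewrite in_cons negb_or => /andP [hil his].
set A := i |: [set x in s].
have eA' : i |: [set x in l :: s] = l |: A.
  by apply/setP => x; rewrite !inE orbCA.
have hlA : l \notin A by rewrite !inE negb_or eq_sym hil hl.
rewrite (IH us his) eA'; set A' := l |: A.
have h1 : forall k : 'I_n.+1, hB (n - k) A' =
    hB (n - k) A + (if (k < n)%N then 'X_l * hB (n - k.+1) A' else 0).
  move=> k; case: ltnP => hk.
    have -> : (n - k = (n - k.+1).+1)%N by lia.
    by rewrite hB_rec.
  have -> : (n - k = 0)%N by have := ltn_ord k; lia.
  by rewrite !hB_0 addr0.
have -> : \sum_(k < n.+1) E k (l :: s) * hB (n - k) A' =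
    \sum_(k < n.+1) E k s * hB (n - k) A +
    (\sum_(k < n.+1) E k s * (if (k < n)%N then 'X_l * hB (n - k.+1) A' else 0) +
     \sum_(k < n.+1) (if (k : nat) is k'.+1 then 'X_l * E k' s else 0) * hB (n - k) A').
  rewrite -!big_split; apply: eq_bigr => k _ /=.
  by rewrite E_cons mulrDl h1 mulrDr addrA.
have hS : \sum_(k < n.+1) E k s * (if (k < n)%N then 'X_l * hB (n - k.+1) A' else 0) =
    \sum_(k < n.+1) (if (k : nat) is k'.+1 then 'X_l * E k' s else 0) * hB (n - k) A'.
  rewrite big_ord_recr /= ltnn mulr0 addr0 [RHS]big_ord_recl /= mul0r add0r.
  by apply: eq_bigr => k _; rewrite /bump /= ltn_ord add1n mulrCA mulrA.
by rewrite hS addxx addr0.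
Qed.

Lemma Der_f0 p : Der (fun _ => 0) p = 0.
Proof. by rewrite /Der big1 // => i _; rewrite mul0r. Qed.

Lemma Der_ext f1 f2 p : (forall i, f1 i = f2 i) -> Der f1 p = Der f2 p.
Proof. by move=> h; rewrite /Der; apply: eq_bigr => i _; rewrite h. Qed.

Lemma Der_sumf M (c : nat -> R) (g : 'I_d -> nat -> R) p :
  Der (fun i => \sum_(k < M) c k * g i k) p =
  \sum_(k < M) c k * Der (fun i => g i k) p.
Proof.
rewrite /Der.
under eq_bigr => i _ do rewrite mulr_suml.
rewrite exchange_big /=; apply: eq_bigr => k _.
by rewrite mulr_sumr; apply: eq_bigr => i _; rewrite mulrA.
Qed.

Definition oth (i : 'I_d) := enum [set~ i].

Lemma oth_perm (g : {perm 'I_d}) i : perm_eq (map g (oth i)) (oth (g i)).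
Proof.
apply: uniq_perm; first by rewrite map_inj_uniq ?enum_uniq //; exact: perm_inj.
  exact: enum_uniq.
move=> x; rewrite /oth mem_enum !inE; apply/mapP/idP => [[y hy ->]|hx].
  by move: hy; rewrite mem_enum !inE (inj_eq perm_inj).
exists ((g^-1)%g x); last by rewrite permKV.
by rewrite mem_enum !inE; apply: contra hx => /eqP <-; rewrite permKV.
Qed.

Lemma E_oth_big i k : (d <= k)%N -> E k (oth i) = 0.
Proof.
move=> hk; apply: E_big; rewrite /oth -cardE cardsC1 card_ord.
by have := ltn_ord i; lia.
Qed.

Lemma key_oth i n :
  'X_i ^+ n = \sum_(k < n.+1) hcomp d (n - k) * E k (oth i).
Proof.
rewrite (@key_id i n (oth i)) ?enum_uniq //; last by rewrite /oth mem_enum !inE eqxx.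
have -> : i |: [set x in oth i] = setT.
  by apply/setP => x; rewrite /oth !inE mem_enum !inE; case: eqP.
by apply: eq_bigr => k _; rewrite hcomp_hB mulrC.
Qed.
End S.

Theorem corollary1p6 (n d m : nat) :
  (d <= m)%N -> (m <= 2 ^ n.+1)%N ->
  forall p : {mpoly 'F_2[d]}, p \is symmetric -> in_Gr_ideal d m (Qm d n p).
Proof.
move=> hdm hm p hp.
pose g (i : 'I_d) (k : nat) : {mpoly 'F_2[d]} := 'X_i ^+ (2 ^ n.+1 - m) * E k (oth i).
pose C k := Der (fun i => g i k) p.
have hf : forall i, fK n.+1 i = \sum_(k < m.+1) hcomp d (m - k) * g i k.
  move=> i; rewrite /fK -(subnK hm) exprD (key_oth i m) mulr_sumr.
  by apply: eq_bigr => k _; rewrite /g mulrCA.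
rewrite Qm_Der (Der_ext _ hf) (Der_sumf m.+1 (fun k => hcomp d (m - k)) g p).
exists (fun j => C (m - j)%N); split.
  move=> j; apply: Der_sym => // s i.
  by rewrite /g msymM msymXn E_msym (E_perm _ (oth_perm s i)).
rewrite [RHS](reindex_inj (inv_inj rev_ordK)).
have -> : \sum_(k < m.+1) hcomp d (m - k) * Der (g^~ k) p =
    \sum_(k < m.+1 | (k < d)%N) hcomp d (m - k) * Der (g^~ k) p.
  rewrite [RHS]big_mkcond; apply: eq_bigr => k _; case: ifP => // hk.
  rewrite (@Der_ext _ _ (fun _ => 0)) ?Der_f0 ?mulr0 // => i.
  by rewrite /g E_oth_big ?mulr0 // leqNgt hk.
apply: eq_big => k; have hk := ltn_ord k;
  have -> : (rev_ord k : nat) = (m - k)%N by rewrite /= subSS.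
  by apply/idP/idP; lia.
move=> _; rewrite subKn; first exact: mulrC.
lia.
Qed.
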